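(* Let $T$ be a tree, $f_1,f_2$ proper 3-colorings of $T$, and $h\in D(f_1,f_2)$. Then there is a walk from $f_1$ to $f_2$ in $\mathcal{C}_3(T)$ of length $\|h\|_1$ in which each vertex $w$ is toggled exactly $|h(w)|$ times, every such toggle changing the color of $w$ by $\operatorname{sign}(h(w))\in\{+1,-1\}$ (in $\mathbb{Z}/3\mathbb{Z}$). In particular the walk contains no two steps that toggle the same vertex in opposite directions.
   Context: Let $T$ be a finite tree with vertex set $V$ and edge set $E$. A proper 3-coloring of $T$ is a map $f\colon V\to\mathbb{Z}/3\mathbb{Z}$ with $f(u)\neq f(v)$ for every edge $uv\in E$. The 3-coloring graph $\mathcal{C}_3(T)$ has the proper 3-colorings as vertices, two colorings adjacent iff they differ at exactly one vertex; a step of a walk changing the color of $w$ by $\pm1$ is a $(\pm1)$-toggle at $w$. A labeling of $T$ is a map $h\colon V\to\mathbb{Z}$ with $|h(u)-h(v)|\le 1$ for every edge $uv\in E$, and $\|h\|_1=\sum_{v\in V}|h(v)|$. Given proper 3-colorings $f,g$, $D(f,g)$ is the set of labelings $h$ with $h(v)\equiv g(v)-f(v)\pmod 3$ for all $v\in V$. *)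

(* Defs.v *)
From mathcomp Require Import all_boot all_order all_algebra.
Set Implicit Arguments. Unset Strict Implicit. Unset Printing Implicit Defensive.
Import Order.TTheory GRing.Theory Num.Theory.

Definition simple_graph (V : finType) (e : rel V) : Prop :=
  symmetric e /\ irreflexive e.

Definition acyclic (V : finType) (e : rel V) : Prop :=
  forall c : seq V, uniq c -> 3 <= size c -> ~~ cycle e c.

Definition connected (V : finType) (e : rel V) : Prop :=
  forall x y : V, connect e x y.

Definition is_tree (V : finType) (e : rel V) : Prop :=
  [/\ simple_graph e, connected e & acyclic e].

Definition coloring (V : finType) := {ffun V -> 'Z_3}.

Definition proper_coloring (V : finType) (e : rel V) (f : coloring V) : bool :=
  [forall u, forall v, e u v ==> (f u != f v)].

Definition C3adj (V : finType) (f g : coloring V) : bool :=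
  #|[set x | f x != g x]| == 1%N.

Definition labeling (V : finType) (e : rel V) (h : V -> int) : Prop :=
  forall u v, e u v -> (`|h u - h v| <= 1)%R.

Definition norm1 (V : finType) (h : V -> int) : nat := \sum_(v : V) absz (h v).

Definition D (V : finType) (e : rel V) (f g : coloring V) (h : V -> int) : Prop :=
  labeling e h /\ forall v, ((h v)%:~R : 'Z_3)%R = (g v - f v)%R.

(* Main.v *)
Require Import Defs.
From mathcomp Require Import all_boot all_order all_algebra zify ring.
Import Order.TTheory GRing.Theory Num.Theory.

Lemma no_drift (V : finType) (e : rel V) (f : V -> 'Z_3) (c : 'Z_3) (S : pred V) (x0 : V) :
  irreflexive e -> acyclic e -> (c + c != 0)%R -> x0 \in S ->
  (forall x, x \in S -> exists y, [&& y \in S, e x y & f y == f x + c]%R) -> False.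
Proof.
move=> irr acy cc Sx0 H.
pose succ x := odflt x [pick y | [&& y \in S, e x y & f y == f x + c]%R].
have Hs : forall x, x \in S -> [&& succ x \in S, e x (succ x) & f (succ x) == f x + c]%R.
  move=> x Sx; rewrite /succ; case: pickP => [y //|none].
  by have [y Hy] := H x Sx; move: (none y); rewrite Hy.
pose y k := iter k succ x0.
have yS : forall k, y k \in S by elim=> [|k IH] //=; case/and3P: (Hs _ IH).
have [a [b ab eab]] : exists a, exists2 b : 'I_#|V|.+1, a != b & y a = y b.
  apply/injectivePn; apply/negP => /injectiveP inj.
  by have := leq_card _ inj; rewrite card_ord ltnn.
have exP : exists n, [exists m : 'I_n, y m == y n].
  case: (ltngtP a b) => [lt|lt|/val_inj E]; last by rewrite E eqxx in ab.
  - by exists b; apply/existsP; exists (Ordinal lt); rewrite eab.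
  - by exists a; apply/existsP; exists (Ordinal lt); rewrite eab.
case: (ex_minnP exP) => n0 /existsP [[m0 /= lm] /eqP Em] minn.
set z := y m0.
have yD : forall k, y (k + m0) = iter k succ z by move=> k; rewrite /y iterD.
have zS : forall k, iter k succ z \in S by move=> k; rewrite -yD.
have Ed : n0 = (n0 - m0) + m0 by rewrite subnK // ltnW.
move: (n0 - m0) Ed => d Ed.
have Ez : iter d succ z = z by rewrite -yD -Ed -Em.
case: d Ed Ez => [|d] Ed Ez; first by rewrite Ed ltnn in lm.
have U : uniq (traject succ z d.+1).
  rewrite looping_uniq; apply/negP => /trajectP [k kd Ek].
  have lt : k + m0 < n0.-1 by rewrite Ed addSn /= ltn_add2r.
  have Pn : [exists m : 'I_(n0.-1), y m == y n0.-1].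
    by apply/existsP; exists (Ordinal lt); rewrite /= yD Ed addSn /= yD Ek.
  by have := minn _ Pn; rewrite Ed addSn /= ltnn.
have L : 3 <= size (traject succ z d.+1).
  clear U; rewrite size_traject; case: d Ed Ez => [|[|d]] Ed Ez //.
  + by case/and3P: (Hs z (zS 0)); rewrite /= in Ez; rewrite Ez (irr z).
  + exfalso; case/and3P: (Hs z (zS 0)) => S1 _ /eqP E1.
    case/and3P: (Hs _ S1) => _ _ /eqP E2.
    move: Ez; rewrite /= => Ez; rewrite Ez E1 -addrA in E2.
    move/eqP: E2; rewrite -subr_eq0 opprD addrA subrr add0r oppr_eq0 => /eqP E2.
    by rewrite E2 in cc.
have C : cycle e (traject succ z d.+1).
  rewrite /=.
  have -> : rcons (traject succ (succ z) d) z = traject succ (succ z) d.+1.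
    by rewrite trajectSr -iterSr Ez.
  apply: (@sub_in_path _ S (frel succ)); last exact: fpath_traject.
  + move=> u v Su _ /eqP <-; by case/and3P: (Hs u Su).
  + apply/allP => u; rewrite in_cons => /orP [/eqP ->|/trajectP [i _ ->]].
      by have := zS 0.
    by have := zS i.+1; rewrite iterSr.
by move: (acy _ U L); rewrite C.
Qed.

Lemma key_s (V : finType) (e : rel V) (f1 f2 : coloring V) (h : V -> int) (s : int) :
  is_tree e -> proper_coloring e f2 -> D e f1 f2 h -> (s = 1 \/ s = -1)%R ->
  (exists v, 0 < s * h v)%R ->
  exists w, [/\ (0 < s * h w)%R,
     (forall v, e w v -> f1 v != f1 w + s%:~R)%R &
     (forall v, e w v -> `|h w - s - h v| <= 1)%R].
Proof.
move=> [[sym irr] _ acy] pf2 [lab Dm] hs [x0 gx0].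
pose g v := (s * h v)%R.
have [w0 _ gmax] := @arg_maxP _ _ V x0 predT g isT.
set M := g w0 in gmax.
have gle : forall v, (g v <= M)%R by move=> v; exact: gmax.
have M0 : (0 < M)%R by apply: lt_le_trans (gle x0).
have lab' : forall u v, e u v -> (g v <= g u + 1)%R.
  move=> u v /lab; rewrite /g; case: hs => ->; lia.
pose c : 'Z_3 := (s%:~R)%R.
pose S := [pred v | g v == M].
case: (boolP [exists w, (w \in S) && [forall v, e w v ==> (f1 v != f1 w + c)%R]]).
  case/existsP => w /andP [/eqP Sw /forallP Hw]; exists w; split.
  - by rewrite -/(g w) Sw.
  - by move=> v ev; have := Hw v; rewrite ev.
  - move=> v ev; have := gle v; have := lab' v w ltac:(by rewrite sym).
    move: Sw M0; rewrite /g; case: hs => ->; lia.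
move=> Hno; exfalso.
apply: (@no_drift V e f1 c S w0 irr acy).
- by rewrite /c; case: hs => ->.
- by rewrite inE.
move=> x Sx; move/negP: Hno => Hno.
have : ~~ [forall v, e x v ==> (f1 v != f1 x + c)%R].
  by apply/negP => F; apply: Hno; apply/existsP; exists x; rewrite Sx.
case/forallPn => v; rewrite negb_imply negbK => /andP [exv /eqP fv].
exists v; rewrite exv fv eqxx andbT /= inE.
move: Sx; rewrite inE => /eqP gx.
case: (eqVneq (g v) M) => // /eqP neq; exfalso.
have gv : g v = (M - 1)%R.
  move: neq (gle v) (lab' v x ltac:(by rewrite sym)); rewrite gx; lia.
have hd : (h x - h v = s)%R by move: gv gx; rewrite /g; case: hs => ->; lia.
have : (s%:~R : 'Z_3)%R = ((f2 x - f1 x) - (f2 v - f1 v))%R.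
  by rewrite -(Dm x) -(Dm v) -intrB hd.
rewrite fv -/c => Ec.
have : f2 x = f2 v.
  apply/eqP; rewrite -subr_eq0; apply/eqP.
  transitivity ((f2 x - f1 x - (f2 v - (f1 x + c))) - c)%R; first by ring.
  by rewrite -Ec subrr.
move/forallP: pf2 => /(_ x) /forallP /(_ v); rewrite exv /= => /negP.
by move=> H /eqP; exact: H.
Qed.

Definition concl (V : finType) (e : rel V) (f1 f2 : coloring V) (h : V -> int) :=
  exists p : seq (coloring V),
    [/\ all (proper_coloring e) p,
        path (@C3adj V) f1 p,
        last f1 p = f2,
        size p = norm1 h
      & forall w : V,
          count (fun st : coloring V * coloring V => st.1 w != st.2 w)
                (zip (f1 :: p) p) = absz (h w)
          /\ all (fun st : coloring V * coloring V =>
                 (st.1 w != st.2 w) ==>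
                 (st.2 w - st.1 w == ((sgz (h w))%:~R : 'Z_3)%R)%R)
              (zip (f1 :: p) p)].
Arguments concl {V} e f1 f2 h.

Lemma main_ind (V : finType) (e : rel V) (f2 : coloring V) (n : nat) :
  is_tree e -> proper_coloring e f2 ->
  forall f1 h, norm1 h = n -> proper_coloring e f1 -> D e f1 f2 h -> concl e f1 f2 h.
Proof.
move=> tree pf2; have [[sym irr] _ _] := tree.
elim: n => [|n IH] f1 h nh pf1 Dh.
  have h0 : forall v, h v = 0%R.
    move=> v; move/eqP: nh; rewrite /norm1 sum_nat_eq0 => /forallP /(_ v) /=.
    by move/eqP/eqP; rewrite absz_eq0 => /eqP.
  have -> : f2 = f1.
    apply/ffunP => v; apply/eqP; rewrite -subr_eq0; apply/eqP.
    by case: Dh => _ /(_ v); rewrite h0 => <-.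
  exists [::]; split => // w; by rewrite h0.
have [v hv] : exists v, h v != 0%R.
  apply/existsP; rewrite -negb_forall; apply/negP => /forallP H0.
  move: nh; rewrite /norm1 (eq_bigr (fun _ => 0%N)) ?big1 // => x _.
  by move: (H0 x) => /eqP ->.
have [s [hs sv]] : exists s : int, (s = 1 \/ s = -1)%R /\ (0 < s * h v)%R.
  case: (ltgtP (h v) 0%R) hv => [lt|gt|->] //=.
  - by exists (-1)%R; split; [right | lia].
  - by exists 1%R; split; [left | lia].
have [w [sw Hp Hl]] := @key_s V e f1 f2 h s tree pf2 Dh hs (ex_intro _ v sv).
have sg : sgz (h w) = s.
  by case: hs sw => -> sw; [rewrite gtr0_sgz //; lia | rewrite ltr0_sgz //; lia].
pose c : 'Z_3 := (s%:~R)%R.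
pose f1' : coloring V := [ffun x => if x == w then (f1 w + c)%R else f1 x].
pose h' := fun x => if x == w then (h w - s)%R else h x.
have c0 : c != 0%R by rewrite /c; case: hs => ->.
have nh' : norm1 h' = n.
  move: (nh); rewrite /norm1 (bigD1 w) //= => nhw; rewrite (bigD1 w) //= /h' eqxx.
  rewrite (eq_bigr (fun x => absz (h x))); last by move=> x /negbTE ->.
  have : absz (h w - s) = (absz (h w)).-1 by case: hs sw => -> sw; lia.
  move=> ->; case: hs sw => -> sw; lia.
have pf1' : proper_coloring e f1'.
  apply/forallP => x; apply/forallP => y; apply/implyP => exy; rewrite !ffunE.
  case: (eqVneq x w) => [xw|xw]; case: (eqVneq y w) => [yw|yw]; subst.
  - by rewrite (irr w) in exy.
  - by rewrite eq_sym; apply: Hp.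
  - by apply: Hp; rewrite sym.
  - by move/forallP: pf1 => /(_ x) /forallP /(_ y); rewrite exy.
have Dh' : D e f1' f2 h'.
  case: Dh => lab Dm; split.
    move=> x y exy; rewrite /h'.
    case: (eqVneq x w) => [xw|xw]; case: (eqVneq y w) => [yw|yw].
    - by rewrite xw yw (irr w) in exy.
    - by apply: Hl; rewrite -xw.
    - by rewrite distrC; apply: Hl; rewrite -yw sym.
    - exact: lab.
  move=> x; rewrite /h' ffunE; case: (eqVneq x w) => [->|xw]; last exact: Dm.
  by rewrite intrB Dm /c; ring.
have [p [pa pp pl ps pw]] := IH f1' h' nh' pf1' Dh'.
exists (f1' :: p); split.
- by rewrite /= pf1'.
- rewrite /= pp andbT /C3adj.
  rewrite (_ : [set x | f1 x != f1' x] = [set w]) ?cards1 //.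
  apply/setP => x; rewrite !inE ffunE.
  case: (eqVneq x w) => [->|xw]; last by rewrite eqxx.
  by rewrite -subr_eq0 opprD addrA subrr add0r oppr_eq0.
- by rewrite /= pl.
- by rewrite /= ps nh' nh.
move=> x; have [pc pal] := pw x; split.
  rewrite /= pc ffunE /h'; case: (eqVneq x w) => [->|xw].
    rewrite -subr_eq0 opprD addrA subrr add0r oppr_eq0 c0 /=.
    by case: hs sw => -> sw; lia.
  by rewrite /= eqxx.
rewrite /= ffunE; apply/andP; split.
  case: (eqVneq x w) => [->|xw]; last by rewrite eqxx.
  by rewrite /= sg; apply/implyP => _; rewrite addrAC subrr add0r; apply/eqP.
move: pal; rewrite /h'; case: (eqVneq x w) => [->|xw] //.
apply: sub_all => st /implyP H; apply/implyP => tog; move: (H tog).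
case: (eqVneq (h w - s)%R 0%R) => [->|nz].
  by rewrite /= subr_eq0 eq_sym (negbTE tog).
suff -> : sgz (h w - s) = sgz (h w) by [].
rewrite sg; case: hs sw nz sg => -> sw nz _.
  by rewrite gtr0_sgz //; move/eqP: nz; lia.
by rewrite ltr0_sgz //; move/eqP: nz; lia.
Qed.

Theorem mainTheorem5 (V : finType) (e : rel V) (f1 f2 : coloring V) (h : V -> int) :
  is_tree e -> proper_coloring e f1 -> proper_coloring e f2 -> D e f1 f2 h ->
  exists p : seq (coloring V),
    [/\ all (proper_coloring e) p,
        path (@C3adj V) f1 p,
        last f1 p = f2,
        size p = norm1 h
      & forall w : V,
          count (fun st : coloring V * coloring V => st.1 w != st.2 w)
                (zip (f1 :: p) p) = absz (h w)
          /\ all (fun st : coloring V * coloring V =>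
                 (st.1 w != st.2 w) ==>
                 (st.2 w - st.1 w == ((sgz (h w))%:~R : 'Z_3)%R)%R)
              (zip (f1 :: p) p)].
Proof.
move=> tree pf1 pf2 Dh.
exact: (@main_ind V e f2 (norm1 h) tree pf2 f1 h erefl pf1 Dh).
Qed.
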